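(* Let $p(z)=z^n+a_nz^{n-1}+\cdots+a_2z+a_1$ be a complex monic polynomial with $n\geq2$ and $a_1\neq0$. If $z\in\mathbb{C}$ is any zero of $p$, then $$|z|\leq\left\{\frac{1}{4}\left(\frac{\delta+1+\sqrt{(\delta-1)^2+4\delta'}}{2}\right)+\frac{3}{4}\left(\frac{1}{2}\left(\delta_1+\delta+\sqrt{(\delta_1-\delta)^2+4\delta_2}\right)+1\right)^{1/2}\right\}^{1/4}.$$
   Context: Let $C_p$ be the $n\times n$ matrix whose first row is $(-a_n,-a_{n-1},\dots,-a_2,-a_1)$, whose entries $(k+1,k)$ equal $1$ for $k=1,\dots,n-1$, and whose other entries are $0$. Define numbers $b_j,c_j,d_j$ ($j=1,\dots,n$) by: the first row of $C_p^2$ is $(b_n,b_{n-1},\dots,b_1)$, the first row of $C_p^3$ is $(c_n,\dots,c_1)$, the first row of $C_p^4$ is $(d_n,\dots,d_1)$ (so $b_j=a_na_j-a_{j-1}$, $c_j=-a_nb_j+a_{n-1}a_j-a_{j-2}$ with $a_0=a_{-1}=0$). Set $\alpha=\sum_{j=1}^n|a_j|^2$, $\beta=\sum_{j=1}^n|b_j|^2$, $\gamma=-\sum_{j=1}^n b_j\overline{a_j}$, $\delta=\frac{1}{2}\left(\alpha+\beta+\sqrt{(\alpha-\beta)^2+4|\gamma|^2}\right)$; $\alpha'=\sum_{j=3}^n|a_j|^2$, $\beta'=\sum_{j=3}^n|b_j|^2$, $\gamma'=-\sum_{j=3}^n\overline{a_j}b_j$, $\delta'=\frac12\left(\alpha'+\beta'+\sqrt{(\alpha'-\beta')^2+4|\gamma'|^2}\right)$;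 $\alpha_1=\sum_{j=1}^n|d_j|^2$, $\beta_1=\sum_{j=1}^n|c_j|^2$, $\gamma_1=\sum_{j=1}^n d_j\overline{c_j}$, $\delta_1=\frac12\left(\alpha_1+\beta_1+\sqrt{(\alpha_1-\beta_1)^2+4|\gamma_1|^2}\right)$; $\gamma_2=\sum_{j=1}^n d_j\overline{b_j}$, $\gamma_3=\sum_{j=1}^n d_j\overline{a_j}$, $\gamma_4=\sum_{j=1}^n c_j\overline{b_j}$, $\gamma_5=\sum_{j=1}^n c_j\overline{a_j}$, and $\delta_2=\frac12\Big(|\gamma_2|^2+|\gamma_3|^2+|\gamma_4|^2+|\gamma_5|^2+\sqrt{\big((|\gamma_2|^2+|\gamma_3|^2)-(|\gamma_4|^2+|\gamma_5|^2)\big)^2+4|\gamma_2\overline{\gamma_4}+\gamma_3\overline{\gamma_5}|^2}\Big)$. *)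

(* Defs.v *)
From HB Require Import structures.
From mathcomp Require Import all_boot all_order all_algebra.
From mathcomp Require Import complex.
Set Implicit Arguments. Unset Strict Implicit. Unset Printing Implicit Defensive.
Import Order.TTheory GRing.Theory Num.Theory.
Local Open Scope ring_scope.

Section Defs.
Variable R : rcfType.
Local Notation C := R[i].

Definition cabs (z : C) : R := Normc.normc z.
Definition cconj (z : C) : C := conjc z.

(* entry (i,j) (0-based, as natural numbers) of an n x n matrix; 0 out of range *)
Definition ent (n : nat) (M : 'M[C]_n) (i j : nat) : C :=
  match (insub i : option 'I_n), (insub j : option 'I_n) with
  | Some k, Some l => M k l
  | _, _ => 0
  end.

(* the companion matrix C_p: first row (-a_n, ..., -a_1), subdiagonal ones *)
Definition compmx (n : nat) (a : nat -> C) : 'M[C]_n :=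
  \matrix_(i < n, j < n)
     (if val i == 0%N then - a (n - val j)%N
      else if val i == (val j).+1 then 1 else 0).

Definition mpow2 n (a : nat -> C) := compmx n a *m compmx n a.
Definition mpow3 n (a : nat -> C) := mpow2 n a *m compmx n a.
Definition mpow4 n (a : nat -> C) := mpow3 n a *m compmx n a.

(* first row of C_p^2 is (b_n, ..., b_1), so b_j sits in column n - j *)
Definition bco n a (j : nat) : C := ent (mpow2 n a) 0 (n - j).
Definition cco n a (j : nat) : C := ent (mpow3 n a) 0 (n - j).
Definition dco n a (j : nat) : C := ent (mpow4 n a) 0 (n - j).

Definition alpha n (a : nat -> C) : R := \sum_(1 <= j < n.+1) cabs (a j) ^+ 2.
Definition beta n a : R := \sum_(1 <= j < n.+1) cabs (bco n a j) ^+ 2.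
Definition gamma n a : C := - \sum_(1 <= j < n.+1) bco n a j * cconj (a j).
Definition delta n a : R :=
  (alpha n a + beta n a
   + Num.sqrt ((alpha n a - beta n a) ^+ 2 + 4 * cabs (gamma n a) ^+ 2)) / 2.

Definition alpha' n (a : nat -> C) : R := \sum_(3 <= j < n.+1) cabs (a j) ^+ 2.
Definition beta' n a : R := \sum_(3 <= j < n.+1) cabs (bco n a j) ^+ 2.
Definition gamma' n a : C := - \sum_(3 <= j < n.+1) cconj (a j) * bco n a j.
Definition delta' n a : R :=
  (alpha' n a + beta' n a
   + Num.sqrt ((alpha' n a - beta' n a) ^+ 2 + 4 * cabs (gamma' n a) ^+ 2)) / 2.

Definition alpha1 n a : R := \sum_(1 <= j < n.+1) cabs (dco n a j) ^+ 2.
Definition beta1 n a : R := \sum_(1 <= j < n.+1) cabs (cco n a j) ^+ 2.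
Definition gamma1 n a : C := \sum_(1 <= j < n.+1) dco n a j * cconj (cco n a j).
Definition delta1 n a : R :=
  (alpha1 n a + beta1 n a
   + Num.sqrt ((alpha1 n a - beta1 n a) ^+ 2 + 4 * cabs (gamma1 n a) ^+ 2)) / 2.

Definition gamma2 n a : C := \sum_(1 <= j < n.+1) dco n a j * cconj (bco n a j).
Definition gamma3 n a : C := \sum_(1 <= j < n.+1) dco n a j * cconj (a j).
Definition gamma4 n a : C := \sum_(1 <= j < n.+1) cco n a j * cconj (bco n a j).
Definition gamma5 n a : C := \sum_(1 <= j < n.+1) cco n a j * cconj (a j).
Definition delta2 n a : R :=
  let g2 := cabs (gamma2 n a) ^+ 2 in
  let g3 := cabs (gamma3 n a) ^+ 2 in
  let g4 := cabs (gamma4 n a) ^+ 2 in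
  let g5 := cabs (gamma5 n a) ^+ 2 in
  (g2 + g3 + g4 + g5
   + Num.sqrt (((g2 + g3) - (g4 + g5)) ^+ 2
       + 4 * cabs (gamma2 n a * cconj (gamma4 n a)
                   + gamma3 n a * cconj (gamma5 n a)) ^+ 2)) / 2.

Definition monpoly n (a : nat -> C) : {poly C} :=
  'X^n + \sum_(1 <= j < n.+1) (a j)%:P * 'X^(j.-1).

End Defs.

(* Main.v *)
Require Import Defs.
From HB Require Import structures.
From mathcomp Require Import all_boot all_order all_algebra.
From mathcomp Require Import complex.
From mathcomp Require Import ring lra zify.
Import Order.TTheory GRing.Theory Num.Theory.
Local Open Scope ring_scope.
Set Implicit Arguments. Unset Strict Implicit.

Lemma cabs2E (R : rcfType) (x : R[i]) : cabs x ^+ 2 = complex.Re x ^+2 + complex.Im x ^+2.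
Proof. by case: x => a b; rewrite /cabs /= sqr_sqrtr // addr_ge0 // sqr_ge0. Qed.

Lemma cabs_ge0 (R : rcfType) (x : R[i]) : 0 <= cabs x.
Proof. by case: x => a b; exact: sqrtr_ge0. Qed.

Lemma ReD (R : rcfType) (x y : R[i]) : complex.Re (x + y) = complex.Re x + complex.Re y.
Proof. by case: x; case: y. Qed.

Lemma cabsD2 (R : rcfType) (u v : R[i]) :
  cabs (u+v)^+2 = cabs u^+2 + cabs v^+2 + 2 * complex.Re (u * conjc v).
Proof. case: u => a b; case: v => c d; rewrite !cabs2E /=. ring. Qed.

Lemma Re_le (R : rcfType) (u : R[i]) : complex.Re u ^+ 2 <= cabs u ^+ 2.
Proof. case: u => a b; rewrite cabs2E /=. nra. Qed.

Lemma mulJ (R : rcfType) (u : R[i]) : u * conjc u = Complex (cabs u ^+ 2) 0.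
Proof. case: u => a b; rewrite cabs2E /=. apply/eqP; rewrite eq_complex /=; apply/andP; split; apply/eqP; ring. Qed.

Lemma cabsM (R : rcfType) (u v : R[i]) : cabs (u * v) = cabs u * cabs v.
Proof. exact: Normc.normcM. Qed.

Lemma cabsJ (R : rcfType) (u : R[i]) : cabs (conjc u) = cabs u.
Proof. by case: u => a b; rewrite /cabs /= sqrrN. Qed.


Lemma RL2 (R : rcfType) (A B G lam s t X : R) : A <= lam -> B <= lam ->
  G <= (lam - A) * (lam - B) -> 0 <= s -> 0 <= t -> X ^+ 2 <= G * s * t ->
  A * s + B * t + 2 * X <= lam * (s + t).
Proof.
move=> hA hB hG hs ht hX.
have hu : 0 <= lam - A by lra.
have hv : 0 <= lam - B by lra.
set u := lam - A in hu hG *; set v := lam - B in hv hG *.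
suff : 2 * X <= u * s + v * t by rewrite /u /v; lra.
have h0 : 0 <= u * s + v * t by apply: addr_ge0; apply: mulr_ge0.
case: (lerP X 0) => hx; first lra.
have h1 : (2 * X) ^+ 2 <= (u * s + v * t) ^+ 2.
  have : 0 <= (u * s - v * t) ^+ 2 by apply: sqr_ge0.
  have : G * s * t <= u * v * s * t.
    have hst : 0 <= s * t by apply: mulr_ge0.
    nra.
  nra.
have h2 : 0 <= 2 * X by lra.
by rewrite -(ler_pXn2r (n:=2)) // ; rewrite nnegrE.
Qed.

Lemma lam_props (R : rcfType) (A B G : R) : 0 <= G ->
  let lam := (A + B + Num.sqrt ((A - B) ^+ 2 + 4 * G)) / 2 in
  [/\ A <= lam, B <= lam & (lam - A) * (lam - B) = G].
Proof.
move=> hG lam; rewrite /lam.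
have hD : 0 <= (A - B) ^+ 2 + 4 * G by apply: addr_ge0; [apply: sqr_ge0| lra].
set s := Num.sqrt _.
have hs : 0 <= s by apply: sqrtr_ge0.
have hs2 : s ^+ 2 = (A - B) ^+ 2 + 4 * G by rewrite sqr_sqrtr.
have hab : `|A - B| <= s.
  rewrite -(ler_pXn2r (n:=2)) ?nnegrE ?normr_ge0 // real_normK ?num_real //.
  lra.
move: hab; rewrite ler_norml => /andP [h1 h2].
split; try lra.
Qed.


Definition nrm (R : rcfType) (lo n : nat) (f : nat -> R[i]) : R :=
  \sum_(lo <= j < n.+1) cabs (f j) ^+ 2.
Definition inner (R : rcfType) (lo n : nat) (f g : nat -> R[i]) : R[i] :=
  \sum_(lo <= j < n.+1) f j * conjc (g j).

Lemma Re_sum (R : rcfType) (lo n : nat) (F : nat -> R[i]) :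
  complex.Re (\sum_(lo <= j < n) F j) = \sum_(lo <= j < n) complex.Re (F j).
Proof. by apply: (big_morph _ (@ReD R)). Qed.

Lemma nrm_ge0 (R : rcfType) lo n (f : nat -> R[i]) : 0 <= nrm lo n f.
Proof. by apply: sumr_ge0 => j _; apply: sqr_ge0. Qed.

Lemma nrm_add (R : rcfType) lo n (f g : nat -> R[i]) :
  nrm lo n (fun j => f j + g j) = nrm lo n f + nrm lo n g + 2 * complex.Re (inner lo n f g).
Proof.
rewrite /nrm /inner Re_sum mulr_sumr -!big_split /=.
by apply: eq_bigr => j _; rewrite cabsD2.
Qed.

Lemma nrm_scale (R : rcfType) lo n (y : R[i]) (f : nat -> R[i]) :
  nrm lo n (fun j => y * f j) = cabs y ^+ 2 * nrm lo n f.
Proof.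
by rewrite /nrm mulr_sumr; apply: eq_bigr => j _; rewrite cabsM exprMn.
Qed.

Lemma inner_scale (R : rcfType) lo n (y1 y2 : R[i]) (f g : nat -> R[i]) :
  inner lo n (fun j => y1 * f j) (fun j => y2 * g j) = y1 * conjc y2 * inner lo n f g.
Proof.
rewrite /inner mulr_sumr; apply: eq_bigr => j _; rewrite rmorphM /=; ring.
Qed.

Lemma nrm_comb (R : rcfType) lo n (y1 y2 : R[i]) (f g : nat -> R[i]) :
  nrm lo n (fun j => y1 * f j + y2 * g j) =
  cabs y1 ^+ 2 * nrm lo n f + cabs y2 ^+ 2 * nrm lo n g
  + 2 * complex.Re (y1 * conjc y2 * inner lo n f g).
Proof.
by rewrite (nrm_add lo n (fun j => y1 * f j) (fun j => y2 * g j)) !nrm_scale inner_scale.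
Qed.

Lemma normc_sum (R : rcfType) (s : seq nat) (F : nat -> R[i]) :
  cabs (\sum_(j <- s) F j) <= \sum_(j <- s) cabs (F j).
Proof.
elim: s => [|x s IH]; first by rewrite !big_nil /cabs Normc.normc0.
rewrite !big_cons; apply: le_trans (le_normcD _ _) _.
by rewrite lerD2l.
Qed.

Lemma CS_real (R : rcfType) (s : seq nat) (p q : nat -> R) :
  (\sum_(j <- s) p j * q j) ^+ 2 <= (\sum_(j <- s) p j ^+ 2) * (\sum_(j <- s) q j ^+ 2).
Proof.
elim: s => [|x s IH]; first by rewrite !big_nil expr0n /= mul0r.
rewrite !big_cons.
set S := \sum_(j <- s) p j * q j in IH *.
set A := \sum_(j <- s) p j ^+ 2 in IH *.
set B := \sum_(j <- s) q j ^+ 2 in IH *.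
have hA : 0 <= A by apply: sumr_ge0 => j _; apply: sqr_ge0.
have hB : 0 <= B by apply: sumr_ge0 => j _; apply: sqr_ge0.
have key : 2 * (p x * q x) * S <= p x ^+ 2 * B + q x ^+ 2 * A.
  have h0 : 0 <= p x ^+ 2 * B + q x ^+ 2 * A.
    by apply: addr_ge0; apply: mulr_ge0 => //; apply: sqr_ge0.
  case: (lerP (2 * (p x * q x) * S) 0) => h; first lra.
  have h2 := ltW h.
  rewrite -(ler_pXn2r (n:=2)) ?nnegrE //.
  have : 0 <= (p x ^+ 2 * B - q x ^+ 2 * A) ^+ 2 by apply: sqr_ge0.
  have : (p x * q x) ^+ 2 * S ^+ 2 <= (p x * q x) ^+ 2 * (A * B).
    by apply: ler_wpM2l => //; apply: sqr_ge0.
  nra.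
nra.
Qed.

Lemma CS (R : rcfType) lo n (f g : nat -> R[i]) :
  cabs (\sum_(lo <= j < n.+1) f j * g j) ^+ 2 <= nrm lo n f * nrm lo n g.
Proof.
have h1 := normc_sum (index_iota lo n.+1) (fun j => f j * g j).
rewrite /nrm.
apply: le_trans (CS_real _ (fun j => cabs (f j)) (fun j => cabs (g j))).
rewrite ler_pXn2r ?nnegrE ?cabs_ge0 //; last first.
  by apply: sumr_ge0 => j _; apply: mulr_ge0; apply: cabs_ge0.
by apply: le_trans h1 _; apply: ler_sum => j _; rewrite cabsM.
Qed.

Lemma CL2 (R : rcfType) lo n (lam : R) (y1 y2 : R[i]) (f g : nat -> R[i]) :
  nrm lo n f <= lam -> nrm lo n g <= lam ->
  cabs (inner lo n f g) ^+ 2 <= (lam - nrm lo n f) * (lam - nrm lo n g) ->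
  nrm lo n (fun j => y1 * f j + y2 * g j) <= lam * (cabs y1 ^+ 2 + cabs y2 ^+ 2).
Proof.
move=> hA hB hG; rewrite nrm_comb.
rewrite [cabs y1 ^+ 2 * _]mulrC [cabs y2 ^+ 2 * _]mulrC.

apply: (RL2 hA hB hG); try apply: sqr_ge0.
apply: le_trans (Re_le _) _.
rewrite !cabsM cabsJ !exprMn.
have : 0 <= cabs y1 ^+ 2 * cabs y2 ^+ 2 by apply: mulr_ge0; apply: sqr_ge0.
nra.
Qed.


Lemma rev_sum (R : rcfType) n (F : nat -> R[i]) :
  \sum_(1 <= j < n.+1) F j = \sum_(i < n) F (n - i)%N.
Proof.
rewrite big_add1 /= big_mkord (reindex_inj rev_ord_inj) /=.
apply: eq_bigr => i _; congr F; have := ltn_ord i; lia.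
Qed.

Lemma ent_E (R : rcfType) n (M : 'M[R[i]]_n) i j (hi : (i < n)%N) (hj : (j < n)%N) :
  ent M i j = M (Ordinal hi) (Ordinal hj).
Proof. by rewrite /ent (insubT (fun k => k < n)%N hi) (insubT (fun k => k < n)%N hj). Qed.

Lemma root_sum (R : rcfType) n (a : nat -> R[i]) z : root (monpoly n a) z ->
  \sum_(1 <= j < n.+1) a j * z ^+ j.-1 = - z ^+ n.
Proof.
rewrite /root /monpoly hornerD hornerXn horner_sum => /eqP h.
apply/eqP; rewrite -subr_eq0 opprK addrC; apply/eqP; rewrite -[RHS]h; congr (_ + _).
by apply: eq_bigr => j _; rewrite hornerCM hornerXn.
Qed.

Definition vv (R : rcfType) n (z : R[i]) : 'cV[R[i]]_n := \col_(i < n) z ^+ (n.-1 - i).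

Lemma comp_eig (R : rcfType) n (a : nat -> R[i]) z : root (monpoly n a) z ->
  compmx n a *m vv n z = z *: vv n z.
Proof.
move=> hr; apply/matrixP => i k; rewrite !mxE /compmx /vv.
have -> : k = ord0 by apply: ord_inj; case: k => [[]].
case: i => [[|i] hi] /=.
  have := root_sum hr; rewrite rev_sum => h.
  rewrite subn0 -exprS prednK //.
  rewrite -[RHS]opprK -h -sumrN; apply: eq_bigr => j _; rewrite !mxE /=.
  have hj := ltn_ord j.
  rewrite mulNr; congr (- (a _ * z ^+ _)); lia.
rewrite (bigD1 (Ordinal (ltnW hi))) //= big1; last first.
  move=> j hj; rewrite !mxE /=.
  have : (i.+1 != (val j).+1)%N.
    by apply: contra hj => /eqP [] h; apply/eqP/ord_inj => /=.
  by move=> /negbTE ->; rewrite mul0r.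
rewrite !mxE /= eqxx mul1r addr0 -exprS; congr (_ ^+ _); lia.
Qed.

Lemma row0 (R : rcfType) n (M : 'M[R[i]]_n) z k : (0 < n)%N ->
  M *m vv n z = z ^+ k *: vv n z ->
  \sum_(1 <= j < n.+1) ent M 0 (n - j) * z ^+ j.-1 = z ^+ (n.-1 + k).
Proof.
move=> hn /matrixP /(_ (Ordinal hn) ord0); rewrite !mxE => h.
rewrite rev_sum exprD mulrC.
move: h; rewrite /= subn0 => <-. apply: eq_bigr => i _.
have hi := ltn_ord i.
have h1 : (n - (n - i) < n)%N by lia.
rewrite (ent_E _ hn h1).
have -> : Ordinal h1 = i by apply: ord_inj => /=; lia.
rewrite /vv mxE; congr (_ * z ^+ _); lia.
Qed.

Lemma mpow_eig (R : rcfType) n (a : nat -> R[i]) z : root (monpoly n a) z ->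
  [/\ mpow2 n a *m vv n z = z ^+ 2 *: vv n z,
      mpow3 n a *m vv n z = z ^+ 3 *: vv n z &
      mpow4 n a *m vv n z = z ^+ 4 *: vv n z].
Proof.
move=> hr; have h1 := comp_eig hr.
have h2 : mpow2 n a *m vv n z = z ^+ 2 *: vv n z.
  by rewrite /mpow2 -mulmxA h1 -scalemxAr h1 scalerA expr2.
have h3 : mpow3 n a *m vv n z = z ^+ 3 *: vv n z.
  by rewrite /mpow3 -mulmxA h1 -scalemxAr h2 scalerA -exprS.
split => //.
by rewrite /mpow4 -mulmxA h1 -scalemxAr h3 scalerA -exprS.
Qed.

Lemma ids (R : rcfType) n (a : nat -> R[i]) z : (0 < n)%N -> root (monpoly n a) z ->
  [/\ \sum_(1 <= j < n.+1) a j * z ^+ j.-1 = - z ^+ n,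
      \sum_(1 <= j < n.+1) bco n a j * z ^+ j.-1 = z ^+ n.+1,
      \sum_(1 <= j < n.+1) cco n a j * z ^+ j.-1 = z ^+ n.+2 &
      \sum_(1 <= j < n.+1) dco n a j * z ^+ j.-1 = z ^+ n.+3].
Proof.
move=> hn hr; have [h2 h3 h4] := mpow_eig hr.
split; first exact: root_sum.
- by rewrite (row0 hn h2); congr (_ ^+ _); lia.
- by rewrite (row0 hn h3); congr (_ ^+ _); lia.
- by rewrite (row0 hn h4); congr (_ ^+ _); lia.
Qed.


Lemma cabsX (R : rcfType) (z : R[i]) m : cabs (z ^+ m) = cabs z ^+ m.
Proof.
elim: m => [|m IH]; first by rewrite !expr0 /cabs Normc.normc1.
by rewrite !exprS cabsM IH.
Qed.

Lemma sum_C (R : rcfType) lo hi (F : nat -> R) :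
  \sum_(lo <= j < hi) Complex (F j) 0 = Complex (\sum_(lo <= j < hi) F j) 0.
Proof.
by have := rmorph_sum (real_complex R) (index_iota lo hi) xpredT F.
Qed.

Lemma shift_sum (R : rcfType) (q : R) k n :
  q ^+ k * \sum_(0 <= i < n) q ^+ i = \sum_(k <= i < n + k) q ^+ i.
Proof.
elim: n => [|n IH]; first by rewrite !big_geq ?mulr0 //.
rewrite big_nat_recr //= mulrDr IH addSn big_nat_recr /=; last by lia.
by rewrite -exprD addnC.
Qed.

Lemma powA (R : rcfType) (q : R) n : (2 <= n)%N ->
  q ^+ 2 * \sum_(0 <= i < n) q ^+ i = q ^+ n.+1 + q ^+ n + \sum_(2 <= i < n) q ^+ i.
Proof.
move=> hn; rewrite shift_sum addn2 !big_nat_recr /=; try lia.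
ring.
Qed.

Lemma powB (R : rcfType) (q : R) n : 0 <= q ->
  q ^+ 4 * \sum_(0 <= i < n) q ^+ i <=
  q ^+ n.+3 + q ^+ n.+2 + q ^+ n.+1 + q ^+ n + \sum_(0 <= i < n) q ^+ i.
Proof.
move=> hq; rewrite shift_sum.
have -> : \sum_(4 <= i < n + 4) q ^+ i =
   \sum_(0 <= i < n + 4) q ^+ i - \sum_(0 <= i < 4) q ^+ i.
  rewrite (@big_cat_nat _ _ _ 4 0 (n + 4)) //=; last by lia.
  lra.
rewrite addn4 !big_nat_recr //=.
rewrite [\sum_(0 <= i < 0) _]big_geq // add0r.
have := exprn_ge0 1 hq; have := exprn_ge0 2 hq; have := exprn_ge0 3 hq.
rewrite expr0; lra.
Qed.


Lemma cabs_real (R : rcfType) (T : R) : 0 <= T -> cabs (Complex T 0) = T.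
Proof. by move=> hT; rewrite /cabs /= expr0n /= addr0 sqrtr_sqr ger0_norm. Qed.

Lemma Gram_final (R : rcfType) lo n (g w : nat -> R[i]) (T lam : R) :
  \sum_(lo <= j < n.+1) g j * w j = Complex T 0 -> 0 <= T -> 0 <= lam ->
  nrm lo n g <= lam * T -> T <= lam * nrm lo n w.
Proof.
move=> hs hT hl hg.
have := CS lo n g w; rewrite hs cabs_real // => h.
have hw := nrm_ge0 lo n w.
have hgg := nrm_ge0 lo n g.
have h2 : T ^+ 2 <= lam * T * nrm lo n w.
  apply: le_trans h _; apply: ler_wpM2r => //.
case: (lerP T 0) => hT0.
  have -> : T = 0 by apply/eqP; rewrite eq_le hT0 hT.
  by apply: mulr_ge0.
nra.
Qed.

Lemma inner4 (R : rcfType) lo n (y1 y2 y3 y4 : R[i]) (f1 f2 f3 f4 : nat -> R[i]) :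
  inner lo n (fun j => y1 * f1 j + y2 * f2 j) (fun j => y3 * f3 j + y4 * f4 j) =
  y1 * conjc y3 * inner lo n f1 f3 + y1 * conjc y4 * inner lo n f1 f4
  + y2 * conjc y3 * inner lo n f2 f3 + y2 * conjc y4 * inner lo n f2 f4.
Proof.
rewrite /inner !mulr_sumr -!big_split; apply: eq_bigr => j _ /=.
rewrite rmorphD !rmorphM /=; ring.
Qed.

Lemma cross2 (R : rcfType) (y3 y4 t1 t2 : R[i]) :
  cabs (conjc y3 * t1 + conjc y4 * t2) ^+ 2 <=
  (cabs y3 ^+ 2 + cabs y4 ^+ 2) * (cabs t1 ^+ 2 + cabs t2 ^+ 2).
Proof.
have h : cabs (conjc y3 * t1 + conjc y4 * t2) <= cabs (conjc y3 * t1) + cabs (conjc y4 * t2)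
  := le_normcD _ _.
rewrite !cabsM !cabsJ in h.
have h0 : 0 <= cabs (conjc y3 * t1 + conjc y4 * t2) := cabs_ge0 _.
have a1 := cabs_ge0 y3; have a2 := cabs_ge0 y4; have a3 := cabs_ge0 t1; have a4 := cabs_ge0 t2.
have h1 : cabs (conjc y3 * t1 + conjc y4 * t2) ^+ 2 <= (cabs y3 * cabs t1 + cabs y4 * cabs t2) ^+ 2.
  rewrite ler_pXn2r ?nnegrE //; nra.
apply: le_trans h1 _.
have : 0 <= (cabs y3 * cabs t2 - cabs y4 * cabs t1) ^+ 2 := sqr_ge0 _.
nra.
Qed.

Lemma kk2 (R : rcfType) (lam : R) (y1 y2 g2 g3 g4 g5 : R[i]) :
  cabs g2 ^+ 2 + cabs g3 ^+ 2 <= lam -> cabs g4 ^+ 2 + cabs g5 ^+ 2 <= lam ->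
  cabs (g2 * conjc g4 + g3 * conjc g5) ^+ 2 <=
     (lam - (cabs g2 ^+ 2 + cabs g3 ^+ 2)) * (lam - (cabs g4 ^+ 2 + cabs g5 ^+ 2)) ->
  cabs (y1 * g2 + y2 * g4) ^+ 2 + cabs (y1 * g3 + y2 * g5) ^+ 2 <=
  lam * (cabs y1 ^+ 2 + cabs y2 ^+ 2).
Proof.
move=> hA hB hG.
have e : cabs (y1 * g2 + y2 * g4) ^+ 2 + cabs (y1 * g3 + y2 * g5) ^+ 2 =
  (cabs g2 ^+ 2 + cabs g3 ^+ 2) * cabs y1 ^+ 2 + (cabs g4 ^+ 2 + cabs g5 ^+ 2) * cabs y2 ^+ 2
  + 2 * complex.Re (y1 * conjc y2 * (g2 * conjc g4 + g3 * conjc g5)).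
  rewrite !cabsD2 !cabsM !exprMn.
  have -> : y1 * conjc y2 * (g2 * conjc g4 + g3 * conjc g5) =
     y1 * g2 * conjc (y2 * g4) + y1 * g3 * conjc (y2 * g5).
    rewrite !rmorphM /=; ring.
  rewrite ReD; ring.
rewrite e; apply: (RL2 hA hB hG); try apply: sqr_ge0.
apply: le_trans (Re_le _) _.
rewrite !cabsM cabsJ !exprMn.
have : 0 <= cabs y1 ^+ 2 * cabs y2 ^+ 2 by apply: mulr_ge0; apply: sqr_ge0.
nra.
Qed.


Lemma addC0 (R : rcfType) (x y : R) : Complex x 0 + Complex y 0 = Complex (x + y) 0 :> R[i].
Proof. by apply/eqP; rewrite eq_complex /= addr0 !eqxx. Qed.

Lemma conj_mul (R : rcfType) (x : R[i]) : conjc x * x = Complex (cabs x ^+ 2) 0.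
Proof. by rewrite mulrC mulJ. Qed.

Lemma Nsum (R : rcfType) (z : R[i]) lo n :
  nrm lo.+1 n (fun j => z ^+ j.-1) = \sum_(lo <= i < n) (cabs z ^+ 2) ^+ i.
Proof.
rewrite /nrm big_add1; apply: eq_bigr => i _ /=; by rewrite cabsX exprAC.
Qed.

Lemma split3 (R : rcfType) n (F : nat -> R[i]) : (2 <= n)%N ->
  (forall j, (j < 3)%N -> F j = 0) ->
  \sum_(1 <= j < n.+1) F j = \sum_(3 <= j < n.+1) F j.
Proof.
move=> hn hF; rewrite (@big_cat_nat _ _ _ 3) //=.
by rewrite big_nat_cond big1 ?add0r // => j /andP [/andP [_ hj] _]; apply: hF.
Qed.

Lemma split3R (R : rcfType) n (F : nat -> R) : (2 <= n)%N ->
  (forall j, (j < 3)%N -> F j = 0) ->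
  \sum_(1 <= j < n.+1) F j = \sum_(3 <= j < n.+1) F j.
Proof.
move=> hn hF; rewrite (@big_cat_nat _ _ _ 3) //=.
by rewrite big_nat_cond big1 ?add0r // => j /andP [/andP [_ hj] _]; apply: hF.
Qed.

Lemma delta_props (R : rcfType) n (a : nat -> R[i]) :
  [/\ nrm 1 n a <= delta n a, nrm 1 n (bco n a) <= delta n a &
      cabs (inner 1 n (bco n a) a) ^+ 2 <= (delta n a - nrm 1 n (bco n a)) * (delta n a - nrm 1 n a)].
Proof.
have [h1 h2 h3] := lam_props (alpha n a) (beta n a) (sqr_ge0 (cabs (gamma n a))).
have h3' : (delta n a - alpha n a) * (delta n a - beta n a) = cabs (gamma n a) ^+ 2 := h3.
have e : cabs (inner 1 n (bco n a) a) = cabs (gamma n a) by rewrite /gamma /cabs normcN.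
by split => //; rewrite e [X in _ <= X]mulrC h3'.
Qed.

Lemma delta'_props (R : rcfType) n (a : nat -> R[i]) :
  [/\ nrm 3 n a <= delta' n a, nrm 3 n (bco n a) <= delta' n a &
      cabs (inner 3 n (bco n a) a) ^+ 2 <= (delta' n a - nrm 3 n (bco n a)) * (delta' n a - nrm 3 n a)].
Proof.
have [h1 h2 h3] := lam_props (alpha' n a) (beta' n a) (sqr_ge0 (cabs (gamma' n a))).
have h3' : (delta' n a - alpha' n a) * (delta' n a - beta' n a) = cabs (gamma' n a) ^+ 2 := h3.
have e : cabs (inner 3 n (bco n a) a) = cabs (gamma' n a).
  rewrite /gamma' /cabs normcN; congr Normc.normc.
  by apply: eq_bigr => j _; rewrite mulrC.
split; [exact: h1 | exact: h2 |].
by rewrite e [X in _ <= X]mulrC h3'.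
Qed.

Lemma delta1_props (R : rcfType) n (a : nat -> R[i]) :
  [/\ nrm 1 n (dco n a) <= delta1 n a, nrm 1 n (cco n a) <= delta1 n a &
      cabs (inner 1 n (dco n a) (cco n a)) ^+ 2 <= (delta1 n a - nrm 1 n (dco n a)) * (delta1 n a - nrm 1 n (cco n a))].
Proof.
have [h1 h2 h3] := lam_props (alpha1 n a) (beta1 n a) (sqr_ge0 (cabs (gamma1 n a))).
have h3' : (delta1 n a - alpha1 n a) * (delta1 n a - beta1 n a) = cabs (gamma1 n a) ^+ 2 := h3.
split; [exact: h1 | exact: h2 |].
by rewrite h3'.
Qed.

Lemma delta2E (R : rcfType) n (a : nat -> R[i]) :
  delta2 n a =
   ((cabs (gamma2 n a) ^+ 2 + cabs (gamma3 n a) ^+ 2) + (cabs (gamma4 n a) ^+ 2 + cabs (gamma5 n a) ^+ 2)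
    + Num.sqrt (((cabs (gamma2 n a) ^+ 2 + cabs (gamma3 n a) ^+ 2) - (cabs (gamma4 n a) ^+ 2 + cabs (gamma5 n a) ^+ 2)) ^+ 2
       + 4 * cabs (gamma2 n a * conjc (gamma4 n a) + gamma3 n a * conjc (gamma5 n a)) ^+ 2)) / 2.
Proof. by rewrite /delta2 [in RHS]addrA. Qed.

Lemma delta2_props (R : rcfType) n (a : nat -> R[i]) :
  [/\ cabs (gamma2 n a) ^+ 2 + cabs (gamma3 n a) ^+ 2 <= delta2 n a,
      cabs (gamma4 n a) ^+ 2 + cabs (gamma5 n a) ^+ 2 <= delta2 n a &
   cabs (gamma2 n a * conjc (gamma4 n a) + gamma3 n a * conjc (gamma5 n a)) ^+ 2 <=
     (delta2 n a - (cabs (gamma2 n a) ^+ 2 + cabs (gamma3 n a) ^+ 2))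
     * (delta2 n a - (cabs (gamma4 n a) ^+ 2 + cabs (gamma5 n a) ^+ 2))].
Proof.
have [h1 h2 h3] := lam_props (cabs (gamma2 n a) ^+ 2 + cabs (gamma3 n a) ^+ 2)
  (cabs (gamma4 n a) ^+ 2 + cabs (gamma5 n a) ^+ 2)
  (sqr_ge0 (cabs (gamma2 n a * conjc (gamma4 n a) + gamma3 n a * conjc (gamma5 n a)))).
rewrite delta2E; split; [exact: h1 | exact: h2 |].
by rewrite h3.
Qed.


Lemma Spos (R : rcfType) (q : R) n : (0 < n)%N -> 0 <= q -> 1 <= \sum_(0 <= i < n) q ^+ i.
Proof.
move=> hn hq; rewrite big_ltn // expr0 lerDl.
by apply: sumr_ge0 => i _; apply: exprn_ge0.
Qed.

Lemma cabs0 (R : rcfType) : cabs (0 : R[i]) = 0.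
Proof. exact: Normc.normc0. Qed.

Lemma partA (R : rcfType) n (a : nat -> R[i]) z : (2 <= n)%N -> root (monpoly n a) z ->
  (cabs z ^+ 2) ^+ 2 <= (delta n a + 1 + Num.sqrt ((delta n a - 1) ^+ 2 + 4 * delta' n a)) / 2.
Proof.
move=> hn hr.
have hn0 : (0 < n)%N by lia.
have [iA iB _ _] := ids hn0 hr.
pose w := fun j : nat => z ^+ j.-1.
pose q := cabs z ^+ 2.
have hq : 0 <= q by apply: sqr_ge0.
pose y1 := conjc (z ^+ n.+1).
pose y2 := conjc (- z ^+ n).
pose g1 := fun j => y1 * bco n a j + y2 * a j.
pose h := fun j => if (3 <= j)%N then conjc (w j) else 0.
pose g := fun j => g1 j + h j.
have hh0 : forall j, (j < 3)%N -> h j = 0 by move=> j hj; rewrite /h leqNgt hj.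
pose P := q ^+ n.+1 + q ^+ n.
pose N' := nrm 3 n w.
have hx1 : cabs (z ^+ n.+1) ^+ 2 = q ^+ n.+1 by rewrite cabsX exprAC.
have hx2 : cabs (- z ^+ n) ^+ 2 = q ^+ n by rewrite /cabs normcN -/(cabs _) cabsX exprAC.
have hy1 : cabs y1 ^+ 2 = q ^+ n.+1 by rewrite cabsJ.
have hy2 : cabs y2 ^+ 2 = q ^+ n by rewrite cabsJ.
have hsum : \sum_(1 <= j < n.+1) g j * w j = Complex (P + N') 0.
  have e0 : \sum_(1 <= j < n.+1) g j * w j =
     \sum_(1 <= j < n.+1) g1 j * w j + \sum_(1 <= j < n.+1) h j * w j.
    by rewrite -big_split; apply: eq_bigr => j _; rewrite /g mulrDl.
  have e1 : \sum_(1 <= j < n.+1) g1 j * w j = y1 * z ^+ n.+1 + y2 * (- z ^+ n).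
    rewrite -iB -iA !mulr_sumr -big_split; apply: eq_bigr => j _ /=; rewrite /g1 /w; ring.
  have e2 : \sum_(1 <= j < n.+1) h j * w j = Complex N' 0.
    rewrite (split3 hn); last first.
      by move=> j hj; rewrite hh0 // mul0r.
    rewrite /N' /nrm -sum_C; apply: eq_big_nat => j /andP [hj _].
    by rewrite /h hj conj_mul.
  by rewrite e0 e1 e2 /y1 /y2 !conj_mul hx1 hx2 !addC0.
have [d1 d2 d3] := delta_props n a.
have hg1 : nrm 1 n g1 <= delta n a * P.
  by rewrite /P -hy1 -hy2; exact: CL2 d2 d1 d3.
have [e1 e2 e3] := delta'_props n a.
have hg1' : nrm 3 n g1 <= delta' n a * P.
  by rewrite /P -hy1 -hy2; exact: CL2 e2 e1 e3.
have hh : nrm 1 n h = N'.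
  rewrite /nrm (split3R hn); last first.
    by move=> j hj; rewrite hh0 // cabs0 expr0n.
  by rewrite /N' /nrm; apply: eq_big_nat => j /andP [hj _]; rewrite /h hj cabsJ.
have hin : inner 1 n g1 h = \sum_(3 <= j < n.+1) g1 j * w j.
  rewrite /inner (split3 hn); last first.
    by move=> j hj; rewrite hh0 // rmorph0 mulr0.
  by apply: eq_big_nat => j /andP [hj _]; rewrite /h hj conjcK.
have hcs := CS 3 n g1 w.
have hd'0 : 0 <= delta' n a by apply: le_trans e1; apply: nrm_ge0.
have [x1 x2 x3] := lam_props (delta n a) 1 hd'0.
have hP : 0 <= P by rewrite /P; apply: addr_ge0; apply: exprn_ge0.
have hN' : 0 <= N' by apply: nrm_ge0.
have hX0 : complex.Re (inner 1 n g1 h) ^+ 2 <= delta' n a * P * N'.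
  apply: le_trans (Re_le _) _; rewrite hin.
  apply: le_trans hcs _; rewrite -/N'.
  by apply: ler_wpM2r.
have x3' := lexx (delta' n a); rewrite -{2}x3 in x3'.
have hRL := RL2 x1 x2 x3' hP hN' hX0.
have hng : nrm 1 n g <= (delta n a + 1 + Num.sqrt ((delta n a - 1) ^+ 2 + 4 * delta' n a)) / 2 * (P + N').
  have := nrm_add 1 n g1 h; rewrite hh => e.
  rewrite /g e; lra.
have hXpos : 0 <= (delta n a + 1 + Num.sqrt ((delta n a - 1) ^+ 2 + 4 * delta' n a)) / 2.
  by apply: le_trans x2; apply: ler01.
have hT : 0 <= P + N' by apply: addr_ge0.
have hG := Gram_final hsum hT hXpos hng.
have hN : nrm 1 n w = \sum_(0 <= i < n) q ^+ i := Nsum z 0 n.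
have hN2 : N' = \sum_(2 <= i < n) q ^+ i := Nsum z 2 n.
have hpA := powA q hn.
have hS := Spos hn0 hq.
rewrite hN in hG; rewrite hN2 in hG.
rewrite /P in hG; rewrite -hpA in hG.
rewrite -/q; nra.
Qed.

Lemma partB (R : rcfType) n (a : nat -> R[i]) z : (2 <= n)%N -> root (monpoly n a) z ->
  (cabs z ^+ 2) ^+ 4 <=
  (delta1 n a + delta n a + Num.sqrt ((delta1 n a - delta n a) ^+ 2 + 4 * delta2 n a)) / 2 + 1.
Proof.
move=> hn hr.
have hn0 : (0 < n)%N by lia.
have [iA iB iC iD] := ids hn0 hr.
pose w := fun j : nat => z ^+ j.-1.
pose q := cabs z ^+ 2.
have hq : 0 <= q by apply: sqr_ge0.
pose y1 := conjc (z ^+ n.+3).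
pose y2 := conjc (z ^+ n.+2).
pose y3 := conjc (z ^+ n.+1).
pose y4 := conjc (- z ^+ n).
pose g1 := fun j => y1 * dco n a j + y2 * cco n a j.
pose g2 := fun j => y3 * bco n a j + y4 * a j.
pose g := fun j => g1 j + g2 j.
pose s1 := q ^+ n.+3 + q ^+ n.+2.
pose s2 := q ^+ n.+1 + q ^+ n.
have hxk : forall k, cabs (z ^+ k) ^+ 2 = q ^+ k by move=> k; rewrite cabsX exprAC.
have hx4 : cabs (- z ^+ n) ^+ 2 = q ^+ n by rewrite /cabs normcN -/(cabs _) hxk.
have hy1 : cabs y1 ^+ 2 = q ^+ n.+3 by rewrite cabsJ.
have hy2 : cabs y2 ^+ 2 = q ^+ n.+2 by rewrite cabsJ.
have hy3 : cabs y3 ^+ 2 = q ^+ n.+1 by rewrite cabsJ.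
have hy4 : cabs y4 ^+ 2 = q ^+ n by rewrite cabsJ.
have hsum : \sum_(1 <= j < n.+1) g j * w j = Complex (s1 + s2) 0.
  have e0 : \sum_(1 <= j < n.+1) g j * w j =
     \sum_(1 <= j < n.+1) g1 j * w j + \sum_(1 <= j < n.+1) g2 j * w j.
    by rewrite -big_split; apply: eq_bigr => j _; rewrite /g mulrDl.
  have e1 : \sum_(1 <= j < n.+1) g1 j * w j = y1 * z ^+ n.+3 + y2 * z ^+ n.+2.
    rewrite -iD -iC !mulr_sumr -big_split; apply: eq_bigr => j _ /=; rewrite /g1 /w; ring.
  have e2 : \sum_(1 <= j < n.+1) g2 j * w j = y3 * z ^+ n.+1 + y4 * (- z ^+ n).
    rewrite -iB -iA !mulr_sumr -big_split; apply: eq_bigr => j _ /=; rewrite /g2 /w; ring.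
  by rewrite e0 e1 e2 /y1 /y2 /y3 /y4 !conj_mul !hxk hx4 !addC0.
have [d1 d2 d3] := delta_props n a.
have [f1 f2 f3] := delta1_props n a.
have [k1 k2 k3] := delta2_props n a.
have hg1 : nrm 1 n g1 <= delta1 n a * s1.
  by rewrite /s1 -hy1 -hy2; exact: CL2 f1 f2 f3.
have hg2 : nrm 1 n g2 <= delta n a * s2.
  by rewrite /s2 -hy3 -hy4; exact: CL2 d2 d1 d3.
pose t1 := y1 * gamma2 n a + y2 * gamma4 n a.
pose t2 := y1 * gamma3 n a + y2 * gamma5 n a.
have hin : inner 1 n g1 g2 = conjc y3 * t1 + conjc y4 * t2.
  have eg2 : inner 1 n (dco n a) (bco n a) = gamma2 n a := erefl.
  have eg3 : inner 1 n (dco n a) a = gamma3 n a := erefl.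
  have eg4 : inner 1 n (cco n a) (bco n a) = gamma4 n a := erefl.
  have eg5 : inner 1 n (cco n a) a = gamma5 n a := erefl.
  rewrite /g1 /g2 inner4 eg2 eg3 eg4 eg5 /t1 /t2; ring.
have hs1 : 0 <= s1 by rewrite /s1; apply: addr_ge0; apply: exprn_ge0.
have hs2 : 0 <= s2 by rewrite /s2; apply: addr_ge0; apply: exprn_ge0.
have hkk : cabs t1 ^+ 2 + cabs t2 ^+ 2 <= delta2 n a * s1.
  by rewrite /s1 -hy1 -hy2; exact: kk2 k1 k2 k3.
have hcr := cross2 y3 y4 t1 t2.
rewrite hy3 hy4 -/s2 in hcr.
have hX0 : complex.Re (inner 1 n g1 g2) ^+ 2 <= delta2 n a * s1 * s2.
  apply: le_trans (Re_le _) _; rewrite hin.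
  apply: le_trans hcr _.
  have := ler_wpM2l hs2 hkk.
  move=> h; apply: le_trans h _; rewrite mulrC; exact: lexx.
have hd2 : 0 <= delta2 n a.
  by apply: le_trans k1; apply: addr_ge0; apply: sqr_ge0.
have [l1 l2 l3] := lam_props (delta1 n a) (delta n a) hd2.
have l3' := lexx (delta2 n a); rewrite -{2}l3 in l3'.
have hRL := RL2 l1 l2 l3' hs1 hs2 hX0.
have hng : nrm 1 n g <= (delta1 n a + delta n a + Num.sqrt ((delta1 n a - delta n a) ^+ 2 + 4 * delta2 n a)) / 2 * (s1 + s2).
  have := nrm_add 1 n g1 g2 => e.
  rewrite /g e; apply: le_trans hRL.
  by rewrite lerD2r; apply: lerD.
have hLpos : 0 <= (delta1 n a + delta n a + Num.sqrt ((delta1 n a - delta n a) ^+ 2 + 4 * delta2 n a)) / 2.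
  by apply: le_trans l1; apply: le_trans f1; apply: nrm_ge0.
have hT : 0 <= s1 + s2 by apply: addr_ge0.
have hG := Gram_final hsum hT hLpos hng.
have hN : nrm 1 n w = \sum_(0 <= i < n) q ^+ i := Nsum z 0 n.
have hpB := powB n hq.
have hS := Spos hn0 hq.
rewrite hN /s1 /s2 addrA in hG.
have hS0 : 0 < \sum_(0 <= i < n) q ^+ i by apply: lt_le_trans hS; apply: ltr01.
rewrite -(ler_pM2r hS0); apply: le_trans hpB _.
by rewrite mulrDl mul1r lerD2r.
Qed.


Theorem mainTheorem13 (R : rcfType) (n : nat) (a : nat -> R[i]) (z : R[i]) :
  (2 <= n)%N -> a 1%N != 0 -> root (monpoly n a) z ->
  cabs z <=
    Num.sqrt (Num.sqrt (
      (1 / 4) * ((delta n a + 1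
                  + Num.sqrt ((delta n a - 1) ^+ 2 + 4 * delta' n a)) / 2)
      + (3 / 4) * Num.sqrt ((delta1 n a + delta n a
                  + Num.sqrt ((delta1 n a - delta n a) ^+ 2 + 4 * delta2 n a)) / 2
                  + 1))).
Proof.
move=> hn _ hr.
have hA := partA hn hr.
have hB := partB hn hr.
have hr0 := cabs_ge0 z.
have hq : 0 <= cabs z ^+ 2 := sqr_ge0 _.
have hq2 : 0 <= (cabs z ^+ 2) ^+ 2 := sqr_ge0 _.
have hq4 : 0 <= (cabs z ^+ 2) ^+ 4 by apply: exprn_ge0.
have hY : (cabs z ^+ 2) ^+ 2 <=
  Num.sqrt ((delta1 n a + delta n a
     + Num.sqrt ((delta1 n a - delta n a) ^+ 2 + 4 * delta2 n a)) / 2 + 1).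
  rewrite -[X in X <= _]ger0_norm // -sqrtr_sqr ler_sqrt; last first.
    by apply: le_trans hB.
  by rewrite -exprM.
have hE : (cabs z ^+ 2) ^+ 2 <=
      (1 / 4) * ((delta n a + 1
                  + Num.sqrt ((delta n a - 1) ^+ 2 + 4 * delta' n a)) / 2)
      + (3 / 4) * Num.sqrt ((delta1 n a + delta n a
                  + Num.sqrt ((delta1 n a - delta n a) ^+ 2 + 4 * delta2 n a)) / 2
                  + 1).
  lra.
have e : cabs z = Num.sqrt (Num.sqrt ((cabs z ^+ 2) ^+ 2)).
  by rewrite sqrtr_sqr ger0_norm // sqrtr_sqr ger0_norm.
rewrite {1}e ler_sqrt ?sqrtr_ge0 // ler_sqrt //.
exact: le_trans hE.
Qed.
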